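(* Let $G$ be a finite group (with the discrete topology), let $G_1, G_2$ be subgroups of $G$, and let $\varphi \colon \widetilde G \to G$ be a continuous surjective homomorphism from a profinite group $\widetilde G$ such that the profinite groups $\varphi^{-1}(G_1)$ and $\varphi^{-1}(G_2)$ are not isomorphic. Assume that for every positive integer $n$, $\widetilde G$ has only finitely many open subgroups of index $n$. Then there exist a finite group $H$, a continuous surjective homomorphism $\psi \colon \widetilde G \to H$, and a group homomorphism $\theta \colon H \to G$ such that $\varphi = \theta \circ \psi$ and $\theta^{-1}(G_1)$ and $\theta^{-1}(G_2)$ are not isomorphic. *)

(* Defs.v *)
From HB Require Import structures.
From mathcomp Require Import all_boot all_order all_algebra all_fingroup.
From mathcomp Require Import all_classical all_reals all_analysis.
Set Implicit Arguments. Unset Strict Implicit. Unset Printing Implicit Defensive.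
Import Order.TTheory GRing.Theory Num.Theory.
Local Open Scope classical_set_scope.
Local Open Scope card_scope.

Definition is_group {T : Type} (mul : T -> T -> T) (one : T) (inv : T -> T) :=
  [/\ (forall x y z, mul x (mul y z) = mul (mul x y) z),
      (forall x, mul one x = x),
      (forall x, mul x one = x),
      (forall x, mul (inv x) x = one) &
      (forall x, mul x (inv x) = one)].

Definition is_topological_group {T : topologicalType}
  (mul : T -> T -> T) (one : T) (inv : T -> T) :=
  [/\ is_group mul one inv,
      continuous (fun p : T * T => mul p.1 p.2) &
      continuous inv].

Definition is_profinite_group {T : topologicalType}
  (mul : T -> T -> T) (one : T) (inv : T -> T) :=
  [/\ is_topological_group mul one inv,
      compact [set: T],
      hausdorff_space T &
      totally_disconnected [set: T]].

Definition is_subgroup {T : Type} (mul : T -> T -> T) (one : T) (inv : T -> T)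
  (U : set T) :=
  [/\ U one, (forall x y, U x -> U y -> U (mul x y)) & (forall x, U x -> U (inv x))].

Definition lcoset {T : Type} (mul : T -> T -> T) (x : T) (U : set T) : set T :=
  [set mul x u | u in U].

Definition has_index {T : Type} (mul : T -> T -> T) (U : set T) (n : nat) :=
  [set lcoset mul x U | x in [set: T]] #= `I_n.

Definition open_subgroups_of_index {T : topologicalType}
  (mul : T -> T -> T) (one : T) (inv : T -> T) (n : nat) : set (set T) :=
  [set U | [/\ is_subgroup mul one inv U, open U & has_index mul U n]].

(* Continuity of a map into a finite group carrying the discrete topology. *)
Definition continuous_to_discrete {T : topologicalType} {V : Type} (f : T -> V) :=
  forall v : V, open (f @^-1` [set v]).

Definition top_group_isomorphic {T : topologicalType} (mul : T -> T -> T)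
  (A B : set T) :=
  exists (f g : T -> T),
    [/\ (forall x, A x -> B (f x)),
        (forall y, B y -> A (g y)),
        (forall x, A x -> g (f x) = x) &
        (forall y, B y -> f (g y) = y)] /\
    [/\ (forall x y, A x -> A y -> f (mul x y) = mul (f x) (f y)),
        {within A, continuous f} &
        {within B, continuous g}].

(* Main.v *)
Require Import Defs.
From HB Require Import structures.
From mathcomp Require Import all_boot all_order all_algebra all_fingroup.
From mathcomp Require Import all_classical all_reals all_analysis.
From mathcomp Require Import finmap.
From mathcomp Require Import zify.
Set Implicit Arguments. Unset Strict Implicit. Unset Printing Implicit Defensive.
Local Open Scope classical_set_scope.

Section Grp.
Variables (T : topologicalType) (mul : T -> T -> T) (one : T) (inv : T -> T).
Hypothesis HG : is_topological_group mul one inv.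

Lemma gA x y z : mul x (mul y z) = mul (mul x y) z.
Proof. by case: HG => -[]. Qed.
Lemma g1m x : mul one x = x.
Proof. by case: HG => -[]. Qed.
Lemma gm1 x : mul x one = x.
Proof. by case: HG => -[]. Qed.
Lemma gVm x : mul (inv x) x = one.
Proof. by case: HG => -[]. Qed.
Lemma gmV x : mul x (inv x) = one.
Proof. by case: HG => -[]. Qed.
Lemma gKV x y : mul (inv x) (mul x y) = y.
Proof. by rewrite gA gVm g1m. Qed.
Lemma gK x y : mul x (mul (inv x) y) = y.
Proof. by rewrite gA gmV g1m. Qed.
Lemma gKr x y : mul (mul y x) (inv x) = y.
Proof. by rewrite -gA gmV gm1. Qed.
Lemma gKVr x y : mul (mul y (inv x)) x = y.
Proof. by rewrite -gA gVm gm1. Qed.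
Lemma gcanl x y z : mul x y = mul x z -> y = z.
Proof. by move=> h; rewrite -(gKV x y) h gKV. Qed.
Lemma ginv_uniq x y : mul x y = one -> y = inv x.
Proof. by move=> h; apply: (@gcanl x); rewrite h gmV. Qed.
Lemma gVK x : inv (inv x) = x.
Proof. by apply/esym/ginv_uniq; rewrite gVm. Qed.
Lemma gVM x y : inv (mul x y) = mul (inv y) (inv x).
Proof. by apply/esym/ginv_uniq; rewrite gA gKr gmV. Qed.
Lemma gV1 : inv one = one.
Proof. by apply/esym/ginv_uniq; rewrite gm1. Qed.

Lemma mul_cont : continuous (fun p : T * T => mul p.1 p.2).
Proof. by case: HG. Qed.
Lemma inv_cont : continuous inv.
Proof. by case: HG. Qed.

Lemma lmul_cont x : continuous (mul x).
Proof.
move=> y; apply: (@cvg_comp _ _ _ (fun y => (x, y)) (fun p : T * T => mul p.1 p.2) (nbhs y) (nbhs (x, y))); last exact: (@mul_cont (x, y)).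
by apply: cvg_pair; [exact: cvg_cst | exact: cvg_id].
Qed.
Lemma rmul_cont x : continuous (mul^~ x).
Proof.
move=> y; apply: (@cvg_comp _ _ _ (fun y => (y, x)) (fun p : T * T => mul p.1 p.2) (nbhs y) (nbhs (y, x))); last exact: (@mul_cont (y, x)).
by apply: cvg_pair; [exact: cvg_id | exact: cvg_cst].
Qed.

Lemma open_lmul x U : open U -> open ((mul x) @^-1` U).
Proof. by move=> oU; apply: open_comp => // y _; exact: lmul_cont. Qed.
Lemma open_rmul x U : open U -> open ((mul^~ x) @^-1` U).
Proof. by move=> oU; apply: open_comp => // y _; exact: rmul_cont. Qed.
Lemma open_inv U : open U -> open (inv @^-1` U).
Proof. by move=> oU; apply: open_comp => // y _; exact: inv_cont. Qed.

Lemma lcosetE x U y : Defs.lcoset mul x U y <-> U (mul (inv x) y).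
Proof.
split; first by case=> u Uu <-; rewrite gKV.
by move=> h; exists (mul (inv x) y) => //; rewrite gK.
Qed.

Lemma open_lcoset x U : open U -> open (Defs.lcoset mul x U).
Proof.
move=> oU; have -> : Defs.lcoset mul x U = (mul (inv x)) @^-1` U.
  by apply/seteqP; split => y /lcosetE.
exact: open_lmul.
Qed.

Definition sgrp (U : set T) := is_subgroup mul one inv U.

Lemma sgrp1 {U} : sgrp U -> U one. Proof. by case. Qed.
Lemma sgrpM {U x y} : sgrp U -> U x -> U y -> U (mul x y). Proof. by case=> _ h _; apply: h. Qed.
Lemma sgrpV {U x} : sgrp U -> U x -> U (inv x). Proof. by case=> _ _ h; apply: h. Qed.
Lemma sgrpVl {U x y} : sgrp U -> U x -> U (mul (inv x) y) -> U y.
Proof. by move=> sU Ux Uxy; rewrite -(gK x y); apply: sgrpM. Qed.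
Lemma sgrpMl {U x y} : sgrp U -> U x -> U (mul x y) -> U y.
Proof. by move=> sU Ux Uxy; rewrite -(gKV x y); apply: sgrpM => //; apply: sgrpV. Qed.
Lemma sgrpI U V : sgrp U -> sgrp V -> sgrp (U `&` V).
Proof.
move=> sU sV; split; first by split; apply: sgrp1.
  by move=> x y [??] [??]; split; apply: sgrpM.
by move=> x [??]; split; apply: sgrpV.
Qed.
Lemma sgrp_setT : sgrp setT. Proof. by []. Qed.

Lemma open_sgrp_closed U : sgrp U -> open U -> closed U.
Proof.
move=> sU oU.
have -> : U = ~` (\bigcup_(x in ~` U) Defs.lcoset mul x U).
  apply/seteqP; split => y.
    move=> Uy [x nUx /lcosetE Uxy]; apply: nUx.
    by have := sgrpM sU Uy (sgrpV sU Uxy); rewrite gVM gVK gK.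
  move=> h; apply: contrapT => nUy; apply: h; exists y => //.
  by apply/lcosetE; rewrite gVm; apply: sgrp1.
apply: open_closedC; apply: bigcup_open => x _; exact: open_lcoset.
Qed.

End Grp.

Section Cpt.
Variable T : topologicalType.
Variable x0 : T.

Lemma my_compact_In0 (A : set T) : compact A -> forall (I : choiceType) (D : set I) (f : I -> set T),
    closed_fam_of A D f -> finI D f -> \bigcap_(i in D) f i !=set0.
Proof.
move=> Aco I D f [g gcl feAg] finIf.
  case: (pselect (exists i, D i)) => [[i Di] | /asboolP]; last first.
    by rewrite asbool_neg => /forallp_asboolPn D0; exists x0 => ? /D0.
  have [|p [Ap clfinIfp]] := Aco _ (finI_filter finIf).
    by exists (f i); [apply: finI_from1|rewrite feAg // => ? []].
  exists p => j Dj; rewrite feAg //; split=> //; apply: gcl => // B.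
  by apply: clfinIfp; exists (f j); [apply: finI_from1|rewrite feAg // => ? []].
Qed.

Lemma my_compact_cover (A : set T) : compact A -> cover_compact A.
Proof.
move=> Aco; rewrite cover_compactE => I D f [g gop feAg] fcov.
  case: (pselect (exists i, D i)) => [[j Dj] | /asboolP]; last first.
    rewrite asbool_neg => /forallp_asboolPn D0.
    by exists fset0 => // ? /fcov [? /D0].
  apply/exists2P; apply: contrapT.
  move=> /asboolP; rewrite asbool_neg => /forallp_asboolPn sfncov.
  suff [p IAnfp] : \bigcap_(i in D) (A `\` f i) !=set0.
    by have /IAnfp [Ap _] := Dj; have /fcov [k /IAnfp [_]] := Ap.
  apply: (my_compact_In0 Aco).
    exists (fun i => ~` g i) => i Di; first exact/open_closedC/gop.
    rewrite predeqE => p; split=> [[Ap nfip] | [Ap ngip]]; split=> //.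
      by move=> gip; apply: nfip; rewrite feAg.
    by rewrite feAg // => - [].
  move=> D' sD.
  have /asboolP : ~ A `<=` cover [set` D'] f by move=> sAIf; exact: (sfncov D').
  rewrite asbool_neg => /existsp_asboolPn [p /asboolP].
  rewrite asbool_neg => /imply_asboolPn [Ap nUfp].
  by exists p => i D'i; split=> // fip; apply: nUfp; exists i.
Qed.

Hypothesis cT : compact [set: T].

Lemma fin_subcover (I : choiceType) (D : set I) (f : I -> set T) :
  (forall i, D i -> open (f i)) -> (forall x, exists2 i, D i & f i x) ->
  exists s : seq I, (forall i, i \in s -> D i) /\ (forall x, exists2 i, i \in s & f i x).
Proof.
move=> oF cov.
have [D' sD' cD'] := my_compact_cover cT oF (fun x _ => cov x).
exists D'; split.
  by move=> i /sD'; rewrite in_setE.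
by move=> x; have [i /= iD fi] := cD' x Logic.I; exists i.
Qed.

Lemma FIP (F : nat -> set T) : (forall n, closed (F n)) ->
  (forall n, F n.+1 `<=` F n) -> (forall n, F n !=set0) ->
  exists z, forall n, F n z.
Proof.
move=> cF dF nF; apply: contrapT => nz.
have cov : forall x, exists2 n : nat, setT n & (~` F n) x.
  move=> x; apply: contrapT => h; apply: nz; exists x => n.
  by apply: contrapT => nFx; apply: h; exists n.
have [s [_ cs]] := fin_subcover (fun n _ => closed_openC (cF n)) cov.
have dec : forall m n, (m <= n)%N -> F n `<=` F m.
  move=> m n /subnK <-; elim: (n - m)%N => [//|k IH].
  by rewrite addSn => z /dF /IH.
have [z Fz] := nF (\max_(i <- s) i)%N.
have [i si nFi] := cs z; apply: nFi; move: Fz; apply: dec.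
exact: leq_bigmax_seq.
Qed.

Lemma bigI_memP (I : eqType) (s : seq I) (P : pred I) (g : I -> set T) z :
  (\big[setI/setT]_(i <- s | P i) g i) z <-> (forall i, i \in s -> P i -> g i z).
Proof.
elim: s => [|a s IH]; first by rewrite big_nil; split.
rewrite big_cons; case: ifP => Pa.
  split; first by move=> [ga /IH h] i; rewrite in_cons => /orP[/eqP->//|/h].
  move=> h; split; first by apply: h => //; rewrite mem_head.
  by apply/IH => i si; apply: h; rewrite in_cons si orbT.
rewrite IH; split => h i.
  by rewrite in_cons => /orP[/eqP-> |/h//]; rewrite Pa.
by move=> si; apply: h; rewrite in_cons si orbT.
Qed.

Lemma bigI_open (I : eqType) (s : seq I) (P : pred I) (g : I -> set T) :
  (forall i, P i -> open (g i)) -> open (\big[setI/setT]_(i <- s | P i) g i).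
Proof.
move=> h; apply: big_ind; [exact: openT | by move=> ???; exact: openI | exact: h].
Qed.

Lemma bigI_closed (I : eqType) (s : seq I) (P : pred I) (g : I -> set T) :
  (forall i, P i -> closed (g i)) -> closed (\big[setI/setT]_(i <- s | P i) g i).
Proof.
move=> h; apply: big_ind; [exact: closedT | by move=> ???; exact: closedI | exact: h].
Qed.

Lemma open_from_nbhd (A : set T) :
  (forall x, A x -> exists U, [/\ open U, U x & U `<=` A]) -> open A.
Proof.
move=> h; rewrite openE => x /h [U [oU Ux UA]].
by apply: (filterS UA); apply: open_nbhs_nbhs.
Qed.

Hypothesis hT : hausdorff_space T.

Lemma sep_closed (P1 P2 : set T) : closed P1 -> closed P2 -> P1 `&` P2 = set0 ->
  exists U1 U2, [/\ open U1, open U2, P1 `<=` U1, P2 `<=` U2 & U1 `&` U2 = set0].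
Proof.
move=> c1 c2 d12.
have sn : set_nbhs P1 (~` P2).
  apply/set_nbhsP; exists (~` P2); split => //; first exact: closed_openC.
  by move=> z P1z P2z; have : (P1 `&` P2) z by []; rewrite d12.
have [V /set_nbhsP [C [oC P1C CV]] clV] := compact_normal hT cT c1 sn.
exists C, (~` closure V); split => //.
- exact/closed_openC/closed_closure.
- by move=> z P2z clz; apply: (clV z clz).
- apply/seteqP; split => // z [Cz]; apply; apply: subset_closure; exact: CV.
Qed.

Hypothesis tdT : totally_disconnected [set: T].

Lemma zero_dim x y : x <> y -> exists C : set T, [/\ clopen C, C x & ~ C y].
Proof.
move=> xy; apply: contrapT => nC.
pose Q := \bigcap_(C in [set C : set T | clopen C /\ C x]) C.
have Qy : Q y.
  move=> C [clC Cx]; apply: contrapT => nCy; apply: nC; exists C; split => //.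
have Qx : Q x by move=> C [].
have cQ : closed Q by apply: closed_bigI => C [[]].
have key : forall P1 P2, closed P1 -> closed P2 -> P1 `&` P2 = set0 ->
    Q `<=` P1 `|` P2 -> P1 x -> Q `<=` P1.
  move=> P1 P2 c1 c2 d12 QP P1x.
  have [U1 [U2 [oU1 oU2 PU1 PU2 dU]]] := sep_closed c1 c2 d12.
  pose D := [set O : set T | O = U1 `|` U2 \/ exists C, [/\ clopen C, C x & O = ~` C]].
  have oD : forall O, D O -> open (id O).
    move=> O [->|[C [[_ clC] _ ->]]]; [exact: openU | exact: closed_openC].
  have cov : forall z, exists2 O, D O & id O z.
    move=> z; case: (pselect (Q z)) => Qz.
      exists (U1 `|` U2); first by left.
      by case: (QP z Qz) => [/PU1|/PU2] h; [left|right].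
    have [C [clC Cx] nCz] : exists2 C, clopen C /\ C x & ~ C z.
      by apply: contrapT => h; apply: Qz => C hC; apply: contrapT => nCz; apply: h; exists C.
    by exists (~` C) => //; right; exists C.
  have [s [sD cs]] := fin_subcover oD cov.
  pose E := \big[setI/setT]_(O <- s | (O \in s) && (O != U1 `|` U2)) (~` O).
  have EP : forall z, E z <-> (forall O, O \in s -> O != U1 `|` U2 -> ~ O z).
    move=> z; split => [/bigI_memP h O sO nO|h].
      by apply: h => //; rewrite sO.
    by apply/bigI_memP => O sO /andP[_ nO]; apply: h.
  have clO : forall O, O \in s -> O != U1 `|` U2 -> clopen (~` O).
    move=> O /sD [->|[C [clC _ ->]]]; first by rewrite eqxx.
    by rewrite setCK.
  have clE : clopen E.
    split.
      by apply: bigI_open => O /andP[sO nO]; case: (clO O sO nO).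
    by apply: bigI_closed => O /andP[sO nO]; case: (clO O sO nO).
  have Ex : E x.
    apply/EP => O sO nO; have := sD O sO; case=> [/eqP|[C [_ Cx ->]]].
      by rewrite (negbTE nO).
    by move=> /(_ Cx).
  have EU : E `<=` U1 `|` U2.
    move=> z Ez; have [W sW Wz] := cs z.
    case: (eqVneq W (U1 `|` U2)) => [<-//|nW].
    by exfalso; move/EP: Ez => /(_ W sW nW).
  pose E' := E `&` U1.
  have E'E : E' = E `&` ~` U2.
    apply/seteqP; split => z [Ez h]; split => //.
      by move=> U2z; have : (U1 `&` U2) z by []; rewrite dU.
    by case: (EU z Ez).
  have clE' : clopen E'.
    split; first by apply: openI => //; case: clE.
    by rewrite E'E; apply: closedI; [case: clE | exact: open_closedC].
  have QE' : Q `<=` E' by move=> z Qz; apply: Qz; split => //; split => //; exact: PU1.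
  move=> z Qz; case: (QP z Qz) => // P2z.
  have [_ U1z] := QE' z Qz.
  have : (U1 `&` U2) z by split => //; exact: PU2.
  by rewrite dU.
have conQ : connected Q.
  move=> B [b Bb] [Co oCo BCo] [Cc cCc BCc].
  have cB : closed B by rewrite BCc; apply: closedI.
  have cP : closed (Q `&` ~` Co) by apply: closedI => //; exact: open_closedC.
  have dP : B `&` (Q `&` ~` Co) = set0.
    by apply/seteqP; split => // z [+ [_ nCz]]; rewrite BCo => -[].
  have cov : Q `<=` B `|` (Q `&` ~` Co).
    move=> z Qz; case: (pselect (Co z)) => Coz; [left|right] => //.
    by rewrite BCo.
  case: (pselect (B x)) => Bx.
    apply/seteqP; split; first by rewrite BCo => z [].
    exact: (key _ _ cB cP dP cov Bx).
  have P1x : (Q `&` ~` Co) x by split => // Cox; apply: Bx; rewrite BCo.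
  have := key _ _ cP cB; rewrite setIC dP => /(_ erefl) .
  move=> /(_ _ P1x); rewrite setUC => /(_ cov) QP.
  exfalso; have Qb : Q b by move: Bb; rewrite BCo => -[].
  by have [_] := QP b Qb; move: Bb; rewrite BCo => -[].
have := connected_component_max Qx (@subsetT _ Q) conQ Qy.
by rewrite tdT // => /= yx; apply: xy.
Qed.

End Cpt.

Section P3.
Variables (T : topologicalType) (mul : T -> T -> T) (one : T) (inv : T -> T).
Hypothesis HG : is_topological_group mul one inv.
Hypothesis cT : compact [set: T].
Hypothesis hT : hausdorff_space T.
Hypothesis tdT : totally_disconnected [set: T].
Local Notation gA := (gA HG).
Local Notation g1m := (g1m HG).
Local Notation gm1 := (gm1 HG).
Local Notation gVm := (gVm HG).
Local Notation gmV := (gmV HG).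
Local Notation gKV := (gKV HG).
Local Notation gK := (gK HG).
Local Notation gKr := (gKr HG).
Local Notation gKVr := (gKVr HG).
Local Notation gVK := (gVK HG).
Local Notation gVM := (gVM HG).
Local Notation gV1 := (gV1 HG).
Local Notation lcosetE := (lcosetE HG).
Local Notation open_lcoset := (open_lcoset HG).
Local Notation open_inv := (open_inv HG).
Local Notation sgrp := (sgrp mul one inv).
Local Notation lcos := (Defs.lcoset mul).
Local Notation fin_subcover := (fin_subcover one cT).

Lemma clopen_sgrp C : clopen C -> C one -> exists S, [/\ sgrp S, open S & S `<=` C].
Proof.
move=> [oC clC] C1.
have loc : forall c, exists UV : set T * set T, [/\ open UV.1, open UV.2, UV.2 one,
    (C c -> UV.1 c) & forall u v, UV.1 u -> UV.2 v -> C (mul u v)].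
  move=> c; case: (pselect (C c)) => Cc; last first.
    by exists (set0, setT); split => //=; [exact: open0|exact: openT].
  have : nbhs (c, one) ((fun p : T * T => mul p.1 p.2) @^-1` C).
    apply: (@mul_cont _ _ _ _ HG (c, one)) => /=; rewrite gm1.
    by apply: open_nbhs_nbhs; split.
  case=> [[U V]] /= [nU nV] UV.
  exists (U°, V°); split => /=.
  - exact: open_interior.
  - exact: open_interior.
  - exact: nbhs_singleton (nbhs_interior nV).
  - by move=> _; exact: nbhs_singleton (nbhs_interior nU).
  - by move=> u v Uu Vv; apply: (UV (u, v)); split; exact: interior_subset.
have [UV hUV] := choice loc.
have cov : forall x, exists2 c, setT c & ((UV c).1 `|` ~` C) x.
  move=> x; exists x => //; case: (pselect (C x)) => Cx; last by right.
  by left; case: (hUV x) => _ _ _ /(_ Cx).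
have oUV : forall c, setT c -> open ((UV c).1 `|` ~` C).
  by move=> c _; case: (hUV c) => h *; exact: openU h (closed_openC clC).
have [s [_ cs]] := fin_subcover oUV cov.
pose W := \big[setI/setT]_(c <- s) (UV c).2.
have oW : open W by apply: bigI_open => c _; case: (hUV c).
have W1 : W one by apply/bigI_memP => c _ _; case: (hUV c).
have CW : forall z w, C z -> W w -> C (mul z w).
  move=> z w Cz Ww; have [c sc] := cs z; case => [Uz|//].
  have [_ _ _ _ h] := hUV c; apply: h => //.
  by move/bigI_memP: Ww; apply.
pose W' := W `&` inv @^-1` W.
have oW' : open W' by apply: openI => //; exact: open_inv.
have W'1 : W' one by split => //=; rewrite gV1.
pose S := [set x | forall y, C (mul y x) <-> C y].
have sS : sgrp S.
  split.
  - by move=> y; rewrite gm1.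
  - move=> x x' Sx Sx' y; rewrite gA; split => h.
      by apply/(Sx y)/(Sx' (mul y x)).
    by apply/(Sx' (mul y x))/(Sx y).
  - move=> x Sx y; split => h.
      by have := (Sx (mul y (inv x))).2 h; rewrite gKVr.
    by apply/(Sx (mul y (inv x))).1; rewrite gKVr.
have W'S : W' `<=` S.
  move=> w [Ww Wiw] y; split => h; last exact: CW.
  by have := CW _ _ h Wiw; rewrite gKr.
exists S; split => //.
- apply: open_from_nbhd => x Sx; exists (lcos x W'); split.
  + exact: open_lcoset.
  + by apply/lcosetE; rewrite gVm.
  + move=> z /lcosetE Wz; rewrite -(gK x z); apply: sgrpM sS Sx _.
    exact: W'S.
- by move=> x Sx; have := (Sx one).2 C1; rewrite g1m.
Qed.

Lemma sep_sgrp z : z <> one -> exists S, [/\ sgrp S, open S & ~ S z].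
Proof.
move=> z1; have [C [clC C1 nCz]] := zero_dim one cT hT tdT (nesym z1).
have [S [sS oS SC]] := clopen_sgrp clC C1.
by exists S; split => // /SC.
Qed.

Lemma fin_cosets U : sgrp U -> open U ->
  exists (a : nat) (t : nat -> T), forall x, exists2 j, (j < a)%N & U (mul (inv (t j)) x).
Proof.
move=> sU oU.
have cov : forall x, exists2 c, setT c & lcos c U x.
  by move=> x; exists x => //; apply/lcosetE; rewrite gVm; exact: sgrp1 sU.
have [s [_ cs]] := fin_subcover (fun c _ => open_lcoset c oU) cov.
exists (size s), (fun j => nth one s j) => x.
have [c sc /lcosetE Uc] := cs x.
by exists (index c s); [rewrite index_mem | rewrite nth_index].
Qed.

End P3.

Local Open Scope card_scope.

Section P4.
Variables (T : topologicalType) (mul : T -> T -> T) (one : T) (inv : T -> T).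
Hypothesis HG : is_topological_group mul one inv.
Hypothesis cT : compact [set: T].
Hypothesis hT : hausdorff_space T.
Hypothesis tdT : totally_disconnected [set: T].
Local Notation gA := (gA HG).
Local Notation g1m := (g1m HG).
Local Notation gm1 := (gm1 HG).
Local Notation gVm := (gVm HG).
Local Notation gmV := (gmV HG).
Local Notation gKV := (gKV HG).
Local Notation gK := (gK HG).
Local Notation gKr := (gKr HG).
Local Notation gKVr := (gKVr HG).
Local Notation gVK := (gVK HG).
Local Notation gVM := (gVM HG).
Local Notation gV1 := (gV1 HG).
Local Notation lcosetE := (lcosetE HG).
Local Notation open_lcoset := (open_lcoset HG).
Local Notation open_inv := (open_inv HG).
Local Notation open_lmul := (open_lmul HG).
Local Notation open_rmul := (open_rmul HG).
Local Notation sgrp := (sgrp mul one inv).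
Local Notation lcos := (Defs.lcoset mul).
Local Notation fin_subcover := (fin_subcover one cT).
Local Notation fin_cosets := (fin_cosets HG cT).
Local Notation sep_sgrp := (sep_sgrp HG cT hT tdT).

Definition idx_le (S V : set T) (m : nat) := exists s : nat -> T, (forall i, S (s i)) /\
  forall x, S x -> exists2 i, (i < m)%N & V (mul (inv (s i)) x).
Definition Fam (S : set T) (m : nat) :=
  [set V : set T | [/\ sgrp V, open V, V `<=` S & idx_le S V m]].
Definition Ch (S : set T) (m : nat) := \bigcap_(V in Fam S m) V.

Lemma lcos_eq V x y : sgrp V -> V (mul (inv y) x) -> lcos x V = lcos y V.
Proof.
move=> sV Vyx; apply/seteqP; split => z /lcosetE Vz; apply/lcosetE.
  by rewrite -(gK x z) gA; apply: sgrpM sV Vyx Vz.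
have Vxy : V (mul (inv x) y) by have := sgrpV sV Vyx; rewrite gVM gVK.
by rewrite -(gK y z) gA; apply: sgrpM sV Vxy Vz.
Qed.

Lemma idx_fix S V m (t : nat -> T) : sgrp S ->
  (forall x, S x -> exists2 j, (j < m)%N & V (mul (inv (t j)) x)) -> sgrp V -> idx_le S V m.
Proof.
move=> sS cov sV.
pose s j := if pselect (exists z, S z /\ V (mul (inv (t j)) z)) is left e then projT1 (cid e) else one.
exists s; split.
  move=> j; rewrite /s; case: pselect => [e|_]; last exact: sgrp1 sS.
  by case: (cid e) => z [].
move=> x Sx; have [j jm Vx] := cov x Sx; exists j => //.
rewrite /s; case: pselect => [e|[]]; last by exists x.
case: (cid e) => z [Sz Vz] /=.
have := sgrpM sV (sgrpV sV Vz) Vx.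
by rewrite gVM gVK -gA gK.
Qed.

Lemma idx_le_mono S V m m' : (m <= m')%N -> idx_le S V m -> idx_le S V m'.
Proof.
move=> mm' [s [Ss h]]; exists s; split => // x /h [i im Vx]; exists i => //.
exact: leq_trans mm'.
Qed.

Lemma Ch_sub S m V : Fam S m V -> Ch S m `<=` V.
Proof. by move=> FV x; apply. Qed.

Lemma Ch_sgrp S m : sgrp (Ch S m).
Proof.
split.
- by move=> V [sV _ _ _]; exact: sgrp1 sV.
- by move=> x y Cx Cy V FV; case: (FV) => sV _ _ _; apply: sgrpM sV (Cx V FV) (Cy V FV).
- by move=> x Cx V FV; case: (FV) => sV _ _ _; apply: sgrpV sV (Cx V FV).
Qed.

Lemma Ch_mono S m m' : (m <= m')%N -> Ch S m' `<=` Ch S m.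
Proof.
move=> mm' x Cx V [sV oV VS iV]; apply: Cx; split => //.
exact: idx_le_mono iV.
Qed.

Lemma Fam_self S m : sgrp S -> open S -> (0 < m)%N -> Fam S m S.
Proof.
move=> sS oS m0; split => //; exists (fun _ => one); split => [_|x Sx].
  exact: sgrp1 sS.
by exists 0%N => //; rewrite gV1 g1m.
Qed.

Lemma Ch_subS S m : sgrp S -> open S -> (0 < m)%N -> Ch S m `<=` S.
Proof. by move=> sS oS m0; apply: Ch_sub; exact: Fam_self. Qed.

Definition cj (a y : T) := mul a (mul y (inv a)).
Lemma cjM a x y : cj a (mul x y) = mul (cj a x) (cj a y).
Proof. by rewrite /cj !gA gKVr. Qed.
Lemma cjV a x : cj a (inv x) = inv (cj a x).
Proof. by rewrite /cj !gVM gVK !gA. Qed.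
Lemma cjK a x : cj (inv a) (cj a x) = x.
Proof. by rewrite /cj gVK !gA gVm g1m gKVr. Qed.
Lemma cjKV a x : cj a (cj (inv a) x) = x.
Proof. by have := cjK (inv a) x; rewrite gVK. Qed.
Lemma cj1 a : cj a one = one.
Proof. by rewrite /cj g1m gmV. Qed.

Lemma Ch_normal S m a x : sgrp S -> S a -> Ch S m x -> Ch S m (cj a x).
Proof.
move=> sS Sa Cx V [sV oV VS [s [Ss hs]]].
pose V' := [set y | V (cj a y)].
have sV' : sgrp V'.
  split.
  - by rewrite /V' /= cj1; exact: sgrp1 sV.
  - by move=> y z Vy Vz; rewrite /V' /= cjM; exact: sgrpM sV Vy Vz.
  - by move=> y Vy; rewrite /V' /= cjV; exact: sgrpV sV Vy.
suff FV' : Fam S m V' by exact: (Cx V' FV').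
split => //.
- exact: (open_rmul (inv a) (open_lmul a oV)).
- move=> y /VS Sy; rewrite -(cjK a y) /cj gVK.
  exact: sgrpM sS (sgrpV sS Sa) (sgrpM sS Sy Sa).
- exists (fun i => cj (inv a) (s i)); split.
    move=> i; rewrite /cj gVK; exact: sgrpM sS (sgrpV sS Sa) (sgrpM sS (Ss i) Sa).
  move=> y Sy.
  have Sy' : S (cj a y) by rewrite /cj; apply: sgrpM sS Sa (sgrpM sS Sy (sgrpV sS Sa)).
  have [i im Vi] := hs _ Sy'; exists i => //.
  by rewrite /V' /= cjM cjV cjKV.
Qed.

Lemma finite_bigcap_open (F : set (set T)) : finite_set F -> (forall V, F V -> open V) ->
  open (\bigcap_(V in F) V).
Proof.
move=> /finite_fsetP [X ->] oF.
have -> : \bigcap_(V in [set` X]) V = \big[setI/setT]_(V <- X | V \in X) V.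
  apply/seteqP; split => z h.
    by apply/bigI_memP => V _ VX; apply: h.
  by move=> V VX; move/bigI_memP: h; apply.
by apply: bigI_open => V VX; apply: oF.
Qed.

End P4.

Local Open Scope card_scope.

Section P5.
Variables (T : topologicalType) (mul : T -> T -> T) (one : T) (inv : T -> T).
Hypothesis HG : is_topological_group mul one inv.
Hypothesis cT : compact [set: T].
Hypothesis hT : hausdorff_space T.
Hypothesis tdT : totally_disconnected [set: T].
Local Notation gA := (gA HG).
Local Notation g1m := (g1m HG).
Local Notation gm1 := (gm1 HG).
Local Notation gVm := (gVm HG).
Local Notation gmV := (gmV HG).
Local Notation gKV := (gKV HG).
Local Notation gK := (gK HG).
Local Notation gKr := (gKr HG).
Local Notation gKVr := (gKVr HG).
Local Notation gVK := (gVK HG).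
Local Notation gVM := (gVM HG).
Local Notation gV1 := (gV1 HG).
Local Notation lcosetE := (lcosetE HG).
Local Notation open_lcoset := (open_lcoset HG).
Local Notation open_inv := (open_inv HG).
Local Notation open_lmul := (open_lmul HG).
Local Notation open_rmul := (open_rmul HG).
Local Notation sgrp := (sgrp mul one inv).
Local Notation lcos := (Defs.lcoset mul).
Local Notation fin_subcover := (fin_subcover one cT).
Local Notation fin_cosets := (fin_cosets HG cT).
Local Notation sep_sgrp := (sep_sgrp HG cT hT tdT).

Hypothesis Hfin : forall n, (0 < n)%N -> finite_set (open_subgroups_of_index mul one inv n).
Local Notation Fam := (Fam mul one inv).
Local Notation Ch := (Ch mul one inv).
Local Notation lcos_eq := (lcos_eq HG).

Lemma Fam_fin S m : sgrp S -> open S -> finite_set (Fam S m).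
Proof.
move=> sS oS; have [a [t ht]] := fin_cosets sS oS.
apply: (@sub_finite_set _ _ (\bigcup_(n in [set n | (0 < n <= a * m)%N])
   open_subgroups_of_index mul one inv n)); last first.
  apply: bigcup_finite.
    apply: (@sub_finite_set _ _ `I_(a * m).+1) => [n /andP[_ h]|]; last exact: finite_II.
    by rewrite /= ltnS.
  by move=> n /andP[n0 _]; exact: Hfin.
move=> V [sV oV VS [s [Ss hs]]].
pose g k := lcos (mul (t (k %/ m)%N) (s (k %% m)%N)) V.
have sub : [set lcos x V | x in setT] `<=` g @` `I_(a * m).
  move=> _ [x _ <-]; have [j ja Sj] := ht x; have [i im Vi] := hs _ Sj.
  have m0 : (0 < m)%N by case: m im {hs g} => [|].
  exists (j * m + i)%N; first by rewrite /=; nia.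
  rewrite /g divnMDl // divn_small // addn0 modnMDl modn_small //.
  apply/esym/lcos_eq => //; by rewrite gVM -gA.
have fin : finite_set [set lcos x V | x in setT].
  exact: sub_finite_set sub (finite_image _ (finite_II _)).
case: fin => n hn; exists n.
  apply/andP; split.
    case: n hn => [|n] // hn; move: hn; rewrite II0 card_eq0 => /eqP c0.
    have : [set lcos x V | x in setT] (lcos one V) by exists one.
    by rewrite c0.
  move: hn; rewrite card_eq_le => /andP[_ h].
  have := card_le_trans h (card_le_trans (subset_card_le sub) (card_image_le _ _)).
  by rewrite card_le_II.
by split.
Qed.

Lemma Ch_open S m : sgrp S -> open S -> open (Ch S m).
Proof.
move=> sS oS; apply: finite_bigcap_open; first exact: Fam_fin.
by move=> V [].
Qed.

Lemma Ch_closed S m : sgrp S -> open S -> closed (Ch S m).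
Proof.
move=> sS oS; apply: (open_sgrp_closed HG); [exact: Ch_sgrp | exact: Ch_open].
Qed.

Lemma Ch_trivial S z : sgrp S -> open S -> (forall m, Ch S m z) -> z = one.
Proof.
move=> sS oS Cz; apply: contrapT => z1.
have [U [sU oU nUz]] := sep_sgrp z1.
pose U' := U `&` S.
have sU' : sgrp U' by exact: sgrpI.
have oU' : open U' by exact: openI.
have [a [t ht]] := fin_cosets sU' oU'.
have iU := idx_fix HG sS (fun x _ => ht x) sU'.
have FU : Fam S a U' by split => //; exact: subIsetr.
by have [] := Ch_sub FU (Cz a).
Qed.

End P5.

Local Open Scope card_scope.

Section P6.
Variables (T : topologicalType) (mul : T -> T -> T) (one : T) (inv : T -> T).
Hypothesis HG : is_topological_group mul one inv.
Hypothesis cT : compact [set: T].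
Hypothesis hT : hausdorff_space T.
Hypothesis tdT : totally_disconnected [set: T].
Local Notation gA := (gA HG).
Local Notation g1m := (g1m HG).
Local Notation gm1 := (gm1 HG).
Local Notation gVm := (gVm HG).
Local Notation gmV := (gmV HG).
Local Notation gKV := (gKV HG).
Local Notation gK := (gK HG).
Local Notation gKr := (gKr HG).
Local Notation gKVr := (gKVr HG).
Local Notation gVK := (gVK HG).
Local Notation gVM := (gVM HG).
Local Notation gV1 := (gV1 HG).
Local Notation lcosetE := (lcosetE HG).
Local Notation open_lcoset := (open_lcoset HG).
Local Notation open_inv := (open_inv HG).
Local Notation open_lmul := (open_lmul HG).
Local Notation open_rmul := (open_rmul HG).
Local Notation sgrp := (sgrp mul one inv).
Local Notation lcos := (Defs.lcoset mul).
Local Notation fin_subcover := (fin_subcover one cT).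
Local Notation fin_cosets := (fin_cosets HG cT).
Local Notation sep_sgrp := (sep_sgrp HG cT hT tdT).

Hypothesis Hfin : forall n, (0 < n)%N -> finite_set (open_subgroups_of_index mul one inv n).
Local Notation Fam := (Fam mul one inv).
Local Notation Ch := (Ch mul one inv).
Local Notation Ch_sub := (@Ch_sub _ mul one inv).
Local Notation Ch_sgrp := (@Ch_sgrp _ mul one inv).
Local Notation Ch_subS := (Ch_subS HG).
Local Notation Ch_normal := (Ch_normal HG).
Local Notation Ch_open := (Ch_open HG cT Hfin).
Local Notation cj := (cj mul inv).

Record good (A B A' B' : set T) (R : T -> T -> Prop) : Prop := Good {
  g_dom : forall x y, R x y -> A x /\ B y;
  g_tot : forall x, A x -> exists y, R x y;
  g_sur : forall y, B y -> exists x, R x y;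
  g_mul : forall x y x' y', R x y -> R x' y' -> R (mul x x') (mul y y');
  g_inv : forall x y, R x y -> R (inv x) (inv y);
  g_ker : forall x y, R x y -> (A' x <-> B' y);
  g_sat : forall x y a b, R x y -> A' a -> B' b -> R (mul x a) (mul y b) }.

Lemma good_flip A B A' B' R : good A B A' B' R -> good B A B' A' (fun y x => R x y).
Proof.
case=> h1 h2 h3 h4 h5 h6 h7; split.
- by move=> y x /h1 [].
- exact: h3.
- exact: h2.
- by move=> y x y' x' r r'; apply: h4.
- by move=> y x r; apply: h5.
- by move=> y x r; split => /(h6 _ _ r).
- by move=> y x b a r Bb Aa; apply: h7.
Qed.

Section GoodProps.
Variables (A B A' B' : set T) (R : T -> T -> Prop).
Hypothesis gR : good A B A' B' R.
Hypotheses (sA : sgrp A) (sA' : sgrp A') (sB' : sgrp B').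

Lemma g_11 : R one one.
Proof.
have [y Ry] := g_tot gR (sgrp1 sA).
have B'y : B' y by apply/(g_ker gR Ry); exact: sgrp1 sA'.
have := g_sat gR Ry (sgrp1 sA') (sgrpV sB' B'y).
by rewrite gm1 gmV.
Qed.

Lemma g_uniq x y y' : R x y -> R x y' -> B' (mul (inv y) y').
Proof.
move=> r r'; have := g_mul gR (g_inv gR r) r'.
by rewrite gVm => /(g_ker gR) h; apply/h; exact: sgrp1 sA'.
Qed.
End GoodProps.

Lemma g_uniq' A B A' B' R x x' y : good A B A' B' R -> sgrp B' -> R x y -> R x' y -> A' (mul (inv x) x').
Proof.
move=> gR sB' r r'; have := g_mul gR (g_inv gR r) r'.
rewrite gVm => /(g_ker gR) h; apply/h; exact: sgrp1 sB'.
Qed.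

Section Char.
Variables (A B A' B' : set T) (R : T -> T -> Prop) (m : nat).
Hypothesis gR : good A B A' B' R.
Hypotheses (sA : sgrp A) (sB : sgrp B) (sA' : sgrp A') (sB' : sgrp B').
Hypotheses (oA' : open A') (oB' : open B').
Hypotheses (A'C : A' `<=` Ch A m) (B'C : B' `<=` Ch B m).

Lemma char_fwd_gen A0 B0 A0' B0' R0 : good A0 B0 A0' B0' R0 -> sgrp A0 -> sgrp A0' -> sgrp B0' ->
  open A0' -> B0' `<=` Ch B0 m -> forall x y, R0 x y -> Ch A0 m x -> Ch B0 m y.
Proof.
move=> g0 sA0 sA0' sB0' oA0' B0C x y Rxy Cx V FV.
case: (FV) => sV oV VB [s [Ss hs]].
pose V' := [set x | exists2 y, V y & R0 x y].
have FV' : Fam A0 m V'.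
  split.
  - split.
    + by exists one; [exact: sgrp1 sV | exact: (g_11 g0 sA0 sA0' sB0')].
    + move=> u u' [v Vv r] [v' Vv' r']; exists (mul v v'); first exact: sgrpM sV Vv Vv'.
      exact: (g_mul g0 r r').
    + by move=> u [v Vv r]; exists (inv v); [exact: sgrpV sV Vv | exact: (g_inv g0 r)].
  - apply: open_from_nbhd => u [v Vv r]; exists (lcos u A0'); split.
    + exact: open_lcoset.
    + by apply/lcosetE; rewrite gVm; exact: sgrp1 sA0'.
    + move=> z /lcosetE A'z; exists v => //.
      by have := g_sat g0 r A'z (sgrp1 sB0'); rewrite gK gm1.
  - by move=> u [v _ /(g_dom g0) []].
  - have [r hr] := choice (fun i => g_sur g0 (Ss i)).
    exists r; split; first by move=> i; case: (g_dom g0 (hr i)).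
    move=> u Au; have [v ruv] := g_tot g0 Au.
    have [_ Bv] := g_dom g0 ruv.
    have [i im Vi] := hs v Bv; exists i => //.
    by exists (mul (inv (s i)) v) => //; exact: (g_mul g0 (g_inv g0 (hr i)) ruv).
have [y' Vy' Rxy'] := Cx V' FV'.
have := B0C _ (g_uniq g0 sA0' Rxy' Rxy) V FV.
by move=> /(sgrpM sV Vy'); rewrite gK.
Qed.

Lemma char_fwd x y : R x y -> Ch A m x -> Ch B m y.
Proof. exact: (char_fwd_gen gR sA sA' sB' oA' B'C). Qed.

Lemma char_bwd x y : R x y -> Ch B m y -> Ch A m x.
Proof.
move=> r; apply: (char_fwd_gen (good_flip gR) sB sB' sA' oB' A'C r).
Qed.

Definition res (R0 : T -> T -> Prop) x y := exists x0 y0,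
  [/\ R0 x0 y0, Ch A m (mul (inv x0) x) & Ch B m (mul (inv y0) y)].

Hypotheses (oA : open A) (oB : open B) (m0 : (0 < m)%N).

Lemma res_good : good A B (Ch A m) (Ch B m) (res R).
Proof.
have sAm := Ch_sgrp A m; have sBm := Ch_sgrp B m.
have AmA := Ch_subS sA oA m0; have BmB := Ch_subS sB oB m0.
split.
- move=> x y [x0 [y0 [r ax bx]]]; have [Ax0 By0] := g_dom gR r.
  split.
    by rewrite -(gK x0 x); exact: (sgrpM sA Ax0 (AmA _ ax)).
  by rewrite -(gK y0 y); exact: (sgrpM sB By0 (BmB _ bx)).
- move=> x /(g_tot gR) [y r]; exists y, x, y; split => //; rewrite gVm; [exact: (sgrp1 sAm) | exact: (sgrp1 sBm)].
- move=> y /(g_sur gR) [x r]; exists x, x, y; split => //; rewrite gVm; [exact: (sgrp1 sAm) | exact: (sgrp1 sBm)].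
- move=> x y x' y' [x0 [y0 [r ax bx]]] [x1 [y1 [r' ax' bx']]].
  exists (mul x0 x1), (mul y0 y1); split; first exact: (g_mul gR r r').
  + have [Ax1 _] := g_dom gR r'.
    have e : mul (inv (mul x0 x1)) (mul x x') = mul (cj (inv x1) (mul (inv x0) x)) (mul (inv x1) x').
      by rewrite /Defs.lcoset /cj gVK gVM !gA gKr.
    rewrite e; apply: sgrpM sAm _ ax'; apply: Ch_normal => //; exact: sgrpV sA Ax1.
  + have [_ By1] := g_dom gR r'.
    have e : mul (inv (mul y0 y1)) (mul y y') = mul (cj (inv y1) (mul (inv y0) y)) (mul (inv y1) y').
      by rewrite /cj gVK gVM !gA gKr.
    rewrite e; apply: sgrpM sBm _ bx'; apply: Ch_normal => //; exact: sgrpV sB By1.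
- move=> x y [x0 [y0 [r ax bx]]]; exists (inv x0), (inv y0); split; first exact: (g_inv gR r).
  + have [Ax0 _] := g_dom gR r.
    have e : mul (inv (inv x0)) (inv x) = cj x0 (inv (mul (inv x0) x)).
      by rewrite /cj gVM !gVK !gA gKr.
    by rewrite e; apply: Ch_normal => //; exact: sgrpV sAm ax.
  + have [_ By0] := g_dom gR r.
    have e : mul (inv (inv y0)) (inv y) = cj y0 (inv (mul (inv y0) y)).
      by rewrite /cj gVM !gVK !gA gKr.
    by rewrite e; apply: Ch_normal => //; exact: sgrpV sBm bx.
- move=> x y [x0 [y0 [r ax bx]]]; split => h.
  + have cx0 : Ch A m x0.
      by have := sgrpM sAm h (sgrpV sAm ax); rewrite gVM gVK gK.
    by rewrite -(gK y0 y); exact: (sgrpM sBm (char_fwd r cx0) bx).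
  + have cy0 : Ch B m y0.
      by have := sgrpM sBm h (sgrpV sBm bx); rewrite gVM gVK gK.
    by rewrite -(gK x0 x); exact: (sgrpM sAm (char_bwd r cy0) ax).
- move=> x y a b [x0 [y0 [r ax bx]]] Aa Bb; exists x0, y0; split => //.
  + by rewrite gA; exact: sgrpM sAm ax Aa.
  + by rewrite gA; exact: sgrpM sBm bx Bb.
Qed.

End Char.

End P6.

Lemma finite_nat_bounded (A : set nat) : finite_set A -> exists K, forall n, A n -> (n <= K)%N.
Proof.
move=> /finite_fsetP [X ->]; exists (\max_(i <- X) i)%N => n /= nX.
exact: leq_bigmax_seq.
Qed.

Lemma FinDec (X : Type) (F : set X) (G : nat -> set X) : finite_set F ->
  (forall k, G k `<=` F) -> (forall k, G k.+1 `<=` G k) -> (forall k, G k !=set0) ->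
  exists x, forall k, G k x.
Proof.
move=> fF GF Gd Gn; apply: contrapT => nx.
have h : forall x, exists k, ~ G k x.
  move=> x; apply: contrapT => hk; apply: nx; exists x => k.
  by apply: contrapT => ng; apply: hk; exists k.
have [kf hkf] := choice h.
have [K hK] := finite_nat_bounded (finite_image kf fF).
have dec : forall m n, (m <= n)%N -> G n `<=` G m.
  move=> m n /subnK <-; elim: (n - m)%N => [//|k IH].
  by rewrite addSn => z /Gd /IH.
have [x Gx] := Gn K.
apply: (hkf x); apply: (dec _ K) => //.
by apply: hK; exists x => //; apply: GF Gx.
Qed.

Section Konig.
Variables (X : Type) (S : nat -> set X) (r : nat -> X -> X).
Hypotheses (Sfin : forall m, finite_set (S m)) (Sne : forall m, S m !=set0)
  (Sr : forall m x, S m.+1 x -> S m (r m x)).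

Fixpoint rr m k x := if k is k'.+1 then r m (rr m.+1 k' x) else x.
Definition D m k := rr m k @` S (m + k).

Lemma D_S k : forall m, D m k `<=` S m.
Proof.
elim: k => [|k IH] m _ [x Sx <-] /=; first by rewrite addn0 in Sx.
apply: Sr; apply: (IH m.+1); exists x => //; by rewrite addSnnS.
Qed.

Lemma D_dec k : forall m, D m k.+1 `<=` D m k.
Proof.
elim: k => [|k IH] m _ [x Sx <-].
  exists (r m x); first by rewrite addn0; apply: Sr; rewrite -addn1.
  by [].
have : D m.+1 k.+1 (rr m.+1 k.+1 x) by exists x => //; rewrite addSnnS.
move=> /IH [x' Sx' e]; exists x'; first by rewrite -addSnnS.
by change (r m (rr m.+1 k x') = r m (rr m.+1 k.+1 x)); rewrite e.
Qed.

Lemma D_ne m k : D m k !=set0.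
Proof. by have [x Sx] := Sne (m + k); exists (rr m k x); exists x. Qed.

Definition E m x := forall k, D m k x.

Lemma E_ne m : exists x, E m x.
Proof.
have [z hz] := @FinDec _ (S m) (D m) (Sfin m) (fun k => @D_S k m) (fun k => @D_dec k m) (fun k => D_ne m k).
by exists z.
Qed.

Lemma E_ext m x : E m x -> exists y, E m.+1 y /\ r m y = x.
Proof.
move=> Ex.
pose G k y := D m.+1 k y /\ r m y = x.
have h1 : forall k, G k `<=` S m.+1 by move=> k y [/D_S].
have h2 : forall k, G k.+1 `<=` G k by move=> k y [/D_dec h e].
have h3 : forall k, G k !=set0.
  move=> k; have [z Sz e] := Ex k.+1.
  exists (rr m.+1 k z); split => //; exists z => //; by rewrite addSnnS.
have [y hy] := FinDec (Sfin m.+1) h1 h2 h3.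
by exists y; split => [k|]; [case: (hy k) | case: (hy 0%N)].
Qed.

Lemma konig : exists u : nat -> X, forall m, S m (u m) /\ r m (u m.+1) = u m.
Proof.
have [x0 Ex0] := E_ne 0.
have h : forall m x, exists y, E m x -> E m.+1 y /\ r m y = x.
  move=> m x; case: (pselect (E m x)) => Ex; last by exists x0.
  by have [y hy] := E_ext Ex; exists y.
have [f hf] := choice (fun p : nat * X => h p.1 p.2).
pose fix u m := if m is m'.+1 then f (m', u m') else x0.
have Eu : forall m, E m (u m).
  by elim => [//|m IH] /=; case: (hf (m, u m) IH).
exists u => m; split.
  by have := Eu m 0%N; move/D_S.
by case: (hf (m, u m) (Eu m)).
Qed.

End Konig.

Section P8.
Variables (T : topologicalType) (mul : T -> T -> T) (one : T) (inv : T -> T).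
Hypothesis HG : is_topological_group mul one inv.
Hypothesis cT : compact [set: T].
Hypothesis hT : hausdorff_space T.
Hypothesis tdT : totally_disconnected [set: T].
Hypothesis Hfin : forall n, (0 < n)%N -> finite_set (open_subgroups_of_index mul one inv n).
Local Notation gA := (gA HG).
Local Notation g1m := (g1m HG).
Local Notation gm1 := (gm1 HG).
Local Notation gVm := (gVm HG).
Local Notation gmV := (gmV HG).
Local Notation gKV := (gKV HG).
Local Notation gK := (gK HG).
Local Notation gKr := (gKr HG).
Local Notation gKVr := (gKVr HG).
Local Notation gVK := (gVK HG).
Local Notation gVM := (gVM HG).
Local Notation gV1 := (gV1 HG).
Local Notation lcosetE := (lcosetE HG).
Local Notation open_lcoset := (open_lcoset HG).
Local Notation open_inv := (open_inv HG).
Local Notation open_lmul := (open_lmul HG).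
Local Notation open_rmul := (open_rmul HG).
Local Notation sgrp := (sgrp mul one inv).
Local Notation lcos := (Defs.lcoset mul).
Local Notation fin_cosets := (fin_cosets HG cT).
Local Notation Fam := (Fam mul one inv).
Local Notation Ch := (Ch mul one inv).
Local Notation Ch_sgrp := (@Ch_sgrp _ mul one inv).
Local Notation Ch_subS := (Ch_subS HG).
Local Notation Ch_open := (Ch_open HG cT Hfin).
Local Notation Ch_closed := (Ch_closed HG cT Hfin).
Local Notation Ch_trivial := (Ch_trivial HG cT hT tdT).
Local Notation good := (good mul inv).
Local Notation g_uniq := (g_uniq HG).

Section Limit.
Variables (A B : set T) (Rs : nat -> T -> T -> Prop).
Hypotheses (sA : sgrp A) (oA : open A) (sB : sgrp B) (oB : open B).
Hypothesis HR : forall m, good A B (Ch A m.+1) (Ch B m.+1) (Rs m).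
Hypothesis Hdec : forall m x y, Rs m.+1 x y -> Rs m x y.

Lemma Rs_coset m x ym : Rs m x ym -> [set y | Rs m x y] = (mul (inv ym)) @^-1` (Ch B m.+1).
Proof.
move=> r; apply/seteqP; split => y /=.
  by move=> ry; exact: (g_uniq (HR m) (Ch_sgrp A m.+1) r ry).
move=> h; have := g_sat (HR m) r (sgrp1 (Ch_sgrp A m.+1)) h.
by rewrite gm1 gK.
Qed.

Lemma lim_ex x : A x -> exists y, forall m, Rs m x y.
Proof.
move=> Ax.
have hF : forall m, exists ym, Rs m x ym := fun m => g_tot (HR m) Ax.
apply: (@FIP _ one cT (fun m => [set y | Rs m x y])).
- move=> m; have [ym r] := hF m; rewrite (Rs_coset r).
  apply: closed_comp; last exact: Ch_closed.
  by move=> z _; exact: (@lmul_cont _ _ _ _ HG _ z).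
- by move=> m y; apply: Hdec.
- by move=> m; have [ym r] := hF m; exists ym.
Qed.

Lemma lim_uniq x y y' : (forall m, Rs m x y) -> (forall m, Rs m x y') -> y = y'.
Proof.
move=> hy hy'.
have h : forall m, Ch B m (mul (inv y) y').
  move=> m; apply: (Ch_mono (leqnSn m)).
  exact: (g_uniq (HR m) (Ch_sgrp _ _) (hy m) (hy' m)).
have e := Ch_trivial sB oB h.
by rewrite -(gK y y') e gm1.
Qed.

Definition limf x := if pselect (exists y, forall m, Rs m x y) is left e then projT1 (cid e) else x.

Lemma limfP x : A x -> forall m, Rs m x (limf x).
Proof.
move=> Ax; rewrite /limf; case: pselect => [e|[]]; last exact: lim_ex.
by case: (cid e).
Qed.

Lemma limf_uniq x y : (forall m, Rs m x y) -> limf x = y.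
Proof.
move=> hy; have [Ax _] := g_dom (HR 0) (hy 0%N).
exact: lim_uniq (limfP Ax) hy.
Qed.

Lemma limfB x : A x -> B (limf x).
Proof. by move=> Ax; case: (g_dom (HR 0) (limfP Ax 0%N)). Qed.

Lemma limfM x y : A x -> A y -> limf (mul x y) = mul (limf x) (limf y).
Proof.
move=> Ax Ay; apply: limf_uniq => m.
exact: (g_mul (HR m) (limfP Ax m) (limfP Ay m)).
Qed.

Lemma limf_cont : {within A, continuous limf}.
Proof.
apply: continuous_in_subspaceT => x /set_mem Ax W nW.
pose W1 := (mul (limf x)) @^-1` W.
have nW1 : nbhs one W1.
  apply: (@lmul_cont _ _ _ _ HG (limf x) one); rewrite gm1; exact: nW.
have [m Bsub] : exists m, Ch B m.+1 `<=` W1.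
  apply: contrapT => nm.
  pose F m := Ch B m.+1 `&` ~` W1°.
  have h1 : forall m, closed (F m).
    move=> k; apply: closedI; first exact: Ch_closed.
    exact/open_closedC/open_interior.
  have h2 : forall m, F m.+1 `<=` F m.
    by move=> k z [Cz nz]; split => //; apply: (Ch_mono (leqnSn k.+1)).
  have h3 : forall m, F m !=set0.
    move=> k; apply: contrapT => e; apply: nm; exists k => z Bz.
    apply: interior_subset; apply: contrapT => nz; by apply: e; exists z; split.
  have [z hz] := FIP one cT h1 h2 h3.
  have z1 : z = one.
    by apply: (Ch_trivial sB oB) => k; apply: (Ch_mono (leqnSn k)); case: (hz k).
  by case: (hz 0%N) => _; rewrite z1.
have sAm := Ch_sgrp A m.+1; have sBm := Ch_sgrp B m.+1.
have AmA := Ch_subS sA oA (ltn0Sn m).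
apply: (filterS _ (@open_nbhs_nbhs _ x (lcos x (Ch A m.+1)) _)); last first.
  split; first by apply: open_lcoset; exact: Ch_open.
  by apply/lcosetE; rewrite gVm; exact: sgrp1 sAm.
move=> x' /lcosetE ax.
have Ax' : A x' by rewrite -(gK x x'); exact: (sgrpM sA Ax (AmA _ ax)).
have r := g_sat (HR m) (limfP Ax m) ax (sgrp1 sBm).
rewrite gK gm1 in r.
have := Bsub _ (g_uniq (HR m) sAm r (limfP Ax' m)).
by rewrite /W1 /= gK.
Qed.

Lemma limf_pack : [/\ (forall x, A x -> B (limf x)), (forall x, A x -> forall m, Rs m x (limf x)),
  (forall x y, (forall m, Rs m x y) -> limf x = y),
  (forall x y, A x -> A y -> limf (mul x y) = mul (limf x) (limf y)) & {within A, continuous limf}].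
Proof. split; [exact: limfB | exact: limfP | exact: limf_uniq | exact: limfM | exact: limf_cont]. Qed.

End Limit.

End P8.

Section P9.
Variables (T : topologicalType) (mul : T -> T -> T) (one : T) (inv : T -> T).
Hypothesis HG : is_topological_group mul one inv.
Hypothesis cT : compact [set: T].
Hypothesis hT : hausdorff_space T.
Hypothesis tdT : totally_disconnected [set: T].
Hypothesis Hfin : forall n, (0 < n)%N -> finite_set (open_subgroups_of_index mul one inv n).
Local Notation gA := (gA HG).
Local Notation g1m := (g1m HG).
Local Notation gm1 := (gm1 HG).
Local Notation gVm := (gVm HG).
Local Notation gmV := (gmV HG).
Local Notation gKV := (gKV HG).
Local Notation gK := (gK HG).
Local Notation gKr := (gKr HG).
Local Notation gKVr := (gKVr HG).
Local Notation gVK := (gVK HG).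
Local Notation gVM := (gVM HG).
Local Notation gV1 := (gV1 HG).
Local Notation lcosetE := (lcosetE HG).
Local Notation open_lcoset := (open_lcoset HG).
Local Notation open_inv := (open_inv HG).
Local Notation open_lmul := (open_lmul HG).
Local Notation open_rmul := (open_rmul HG).
Local Notation sgrp := (sgrp mul one inv).
Local Notation lcos := (Defs.lcoset mul).
Local Notation fin_cosets := (fin_cosets HG cT).
Local Notation Fam := (Fam mul one inv).
Local Notation Ch := (Ch mul one inv).
Local Notation Ch_sgrp := (@Ch_sgrp _ mul one inv).
Local Notation Ch_subS := (Ch_subS HG).
Local Notation Ch_open := (Ch_open HG cT Hfin).
Local Notation Ch_closed := (Ch_closed HG cT Hfin).
Local Notation Ch_trivial := (Ch_trivial HG cT hT tdT).
Local Notation good := (good mul inv).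
Local Notation g_uniq := (g_uniq HG).

Lemma iso_from_family A B (Rs : nat -> T -> T -> Prop) : sgrp A -> open A -> sgrp B -> open B ->
  (forall m, good A B (Ch A m.+1) (Ch B m.+1) (Rs m)) ->
  (forall m x y, Rs m.+1 x y -> Rs m x y) -> top_group_isomorphic mul A B.
Proof.
move=> sA oA sB oB HR Hdec.
pose Rs' m y x := Rs m x y.
have HR' : forall m, good B A (Ch B m.+1) (Ch A m.+1) (Rs' m) by move=> m; exact: good_flip.
have Hdec' : forall m x y, Rs' m.+1 x y -> Rs' m x y by move=> m x y; exact: Hdec.
have [f1 f2 f3 f4 f5] := limf_pack HG cT hT tdT Hfin sA oA sB oB HR Hdec.
have [g1 g2 g3 g4 g5] := limf_pack HG cT hT tdT Hfin sB oB sA oA HR' Hdec'.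
exists (limf Rs), (limf Rs'); split; split.
- exact: f1.
- exact: g1.
- by move=> x Ax; apply: g3 => m; exact: f2.
- by move=> y By; apply: f3 => m; exact: g2.
- exact: f4.
- exact: f5.
- exact: g5.
Qed.

End P9.

Lemma finite_powerset (K : choiceType) (X : set K) : finite_set X -> finite_set [set Y | Y `<=` X].
Proof.
move=> /finite_fsetP [F ->].
apply: (@sub_finite_set _ _ ((fun G : {fset K} => [set` G]) @` [set` fpowerset F])); last first.
  exact: finite_image (finite_fset _).
move=> Y YF; exists [fset y in F | `[< Y y >]]%fset.
  rewrite /= fpowersetE; apply/fsubsetP => y; rewrite !inE.
  by case/andP.
apply/seteqP; split => z /=.
  by rewrite !inE => /andP[_ /asboolP].
move=> Yz; rewrite !inE; apply/andP; split; last exact/asboolP.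
exact: YF.
Qed.

Section P10.
Variables (T : topologicalType) (mul : T -> T -> T) (one : T) (inv : T -> T).
Hypothesis HG : is_topological_group mul one inv.
Hypothesis cT : compact [set: T].
Hypothesis hT : hausdorff_space T.
Hypothesis tdT : totally_disconnected [set: T].
Hypothesis Hfin : forall n, (0 < n)%N -> finite_set (open_subgroups_of_index mul one inv n).
Local Notation gA := (gA HG).
Local Notation g1m := (g1m HG).
Local Notation gm1 := (gm1 HG).
Local Notation gVm := (gVm HG).
Local Notation gmV := (gmV HG).
Local Notation gKV := (gKV HG).
Local Notation gK := (gK HG).
Local Notation gKr := (gKr HG).
Local Notation gKVr := (gKVr HG).
Local Notation gVK := (gVK HG).
Local Notation gVM := (gVM HG).
Local Notation gV1 := (gV1 HG).
Local Notation lcosetE := (lcosetE HG).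
Local Notation open_lcoset := (open_lcoset HG).
Local Notation open_inv := (open_inv HG).
Local Notation open_lmul := (open_lmul HG).
Local Notation open_rmul := (open_rmul HG).
Local Notation sgrp := (sgrp mul one inv).
Local Notation lcos := (Defs.lcoset mul).
Local Notation fin_cosets := (fin_cosets HG cT).
Local Notation Fam := (Fam mul one inv).
Local Notation Ch := (Ch mul one inv).
Local Notation Ch_sgrp := (@Ch_sgrp _ mul one inv).
Local Notation Ch_subS := (Ch_subS HG).
Local Notation Ch_open := (Ch_open HG cT Hfin).
Local Notation Ch_closed := (Ch_closed HG cT Hfin).
Local Notation Ch_trivial := (Ch_trivial HG cT hT tdT).
Local Notation good := (good mul inv).
Local Notation g_uniq := (g_uniq HG).

Lemma lcos_self V x : sgrp V -> lcos x V x.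
Proof. by move=> sV; apply/lcosetE; rewrite gVm; exact: sgrp1 sV. Qed.

Lemma cosets_fin V : sgrp V -> open V -> finite_set [set lcos x V | x in setT].
Proof.
move=> sV oV; have [a [t ht]] := fin_cosets sV oV.
apply: (@sub_finite_set _ _ ((fun j => lcos (t j) V) @` `I_a)); last first.
  exact: finite_image (finite_II _).
move=> _ [x _ <-]; have [j ja Vj] := ht x; exists j => //.
exact/esym/(lcos_eq HG).
Qed.

Lemma good_fin A B A' B' : sgrp A' -> sgrp B' -> open A' -> open B' ->
  finite_set [set R | good A B A' B' R].
Proof.
move=> sA' sB' oA' oB'.
pose CA := [set lcos x A' | x in setT]; pose CB := [set lcos y B' | y in setT].
pose code (R : T -> T -> Prop) := [set p : set T * set T | exists x y, R x y /\ p = (lcos x A', lcos y B')].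
pose dec (P : set (set T * set T)) (x y : T) := P (lcos x A', lcos y B').
apply: (@sub_finite_set _ _ (dec @` [set P | P `<=` CA `*` CB])); last first.
  apply: finite_image; apply: finite_powerset; apply: finite_setX.
    exact: cosets_fin.
  exact: cosets_fin.
move=> R gR; exists (code R).
  by move=> _ [x [y [_ ->]]]; split; [exists x | exists y].
apply: boolp.funext => x; apply: boolp.funext => y; apply: boolp.propext; split.
  move=> [x0 [y0 [r [ex ey]]]].
  have ax : A' (mul (inv x0) x) by apply/lcosetE; rewrite -ex; exact: lcos_self.
  have bx : B' (mul (inv y0) y) by apply/lcosetE; rewrite -ey; exact: lcos_self.
  by have := g_sat gR r ax bx; rewrite !gK.
by move=> r; exists x, y.
Qed.

End P10.

Section P11.
Variables (T : topologicalType) (mul : T -> T -> T) (one : T) (inv : T -> T).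
Hypothesis HG : is_topological_group mul one inv.
Hypothesis cT : compact [set: T].
Local Notation gA := (gA HG).
Local Notation g1m := (g1m HG).
Local Notation gm1 := (gm1 HG).
Local Notation gVm := (gVm HG).
Local Notation gmV := (gmV HG).
Local Notation gKV := (gKV HG).
Local Notation gK := (gK HG).
Local Notation gKr := (gKr HG).
Local Notation gKVr := (gKVr HG).
Local Notation gVK := (gVK HG).
Local Notation gVM := (gVM HG).
Local Notation gV1 := (gV1 HG).
Local Notation lcosetE := (lcosetE HG).
Local Notation open_lcoset := (open_lcoset HG).
Local Notation open_inv := (open_inv HG).
Local Notation open_lmul := (open_lmul HG).
Local Notation open_rmul := (open_rmul HG).
Local Notation sgrp := (sgrp mul one inv).
Local Notation lcos := (Defs.lcoset mul).
Local Notation fin_cosets := (fin_cosets HG cT).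
Local Notation Fam := (Fam mul one inv).
Local Notation Ch := (Ch mul one inv).
Local Notation Ch_sgrp := (@Ch_sgrp _ mul one inv).
Local Notation Ch_subS := (Ch_subS HG).
Local Notation good := (good mul inv).
Local Notation g_uniq := (g_uniq HG).
Local Notation lcos_eq := (lcos_eq HG).
Local Notation lcos_self := (lcos_self HG).

Lemma hom1 (gT : finGroupType) (f : T -> gT) : (forall x y, f (mul x y) = (f x * f y)%g) -> f one = 1%g.
Proof.
move=> fM; apply: (@mulgI _ (f one)); rewrite mulg1 -fM g1m //.
Qed.

Lemma homV (gT : finGroupType) (f : T -> gT) : (forall x y, f (mul x y) = (f x * f y)%g) ->
  forall x, f (inv x) = (f x)^-1%g.
Proof.
move=> fM x; apply: (@mulgI _ (f x)); rewrite -fM gmV (hom1 fM) mulgV //.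
Qed.

Lemma hom_eq (gT : finGroupType) (f : T -> gT) : (forall x y, f (mul x y) = (f x * f y)%g) ->
  forall x x0, f x = f x0 <-> f (mul (inv x0) x) = 1%g.
Proof.
move=> fM x x0; rewrite fM (homV fM); split => [->|h]; first by rewrite mulVg.
by rewrite -(mulKVg (f x0) (f x)) h mulg1.
Qed.

Lemma lcos_lcos a b V : lcos a (lcos b V) = lcos (mul a b) V.
Proof.
apply/seteqP; split => z.
  by case=> _ [v Vv <-] <-; exists v => //; rewrite gA.
by case=> v Vv <-; exists (mul b v); [exists v | rewrite gA].
Qed.

Lemma lcos1 V : lcos one V = V.
Proof.
apply/seteqP; split => z; first by case=> v Vv <-; rewrite g1m.
by move=> Vz; exists z => //; rewrite g1m.
Qed.

Section Quot.
Variable W : set T.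
Hypotheses (sW : sgrp W) (oW : open W).

Definition cosW := [set lcos x W | x in setT].
Definition Cos : {fset (set T)} := fset_set cosW.

Lemma CosP c : c \in Cos <-> cosW c.
Proof. rewrite in_fset_set; [by rewrite in_setE | exact: (cosets_fin HG cT sW oW)]. Qed.

Lemma act_mem x (c : Cos) : lcos (inv x) (val c) \in Cos.
Proof.
have /CosP [z _ ez] := valP c.
by apply/CosP; exists (mul (inv x) z) => //; rewrite -ez lcos_lcos.
Qed.

Definition act x (c : Cos) : Cos := insubd c (lcos (inv x) (val c)).

Lemma act_val x c : val (act x c) = lcos (inv x) (val c).
Proof. by rewrite insubdK //; exact: act_mem. Qed.

Lemma act_inj x : injective (act x).
Proof.
move=> c1 c2 e; apply: val_inj; have := congr1 val e; rewrite !act_val => e'.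
by have := congr1 (lcos x) e'; rewrite !lcos_lcos gmV !lcos1.
Qed.

Definition rho x : {perm Cos} := perm (@act_inj x).

Lemma rhoE x c : rho x c = act x c.
Proof. exact: permE. Qed.

Lemma rhoM x y : rho (mul x y) = (rho x * rho y)%g.
Proof.
apply/permP => c; rewrite permM !rhoE; apply: val_inj.
by rewrite !act_val lcos_lcos gVM.
Qed.

Definition Im : {set {perm Cos}} := [set p | `[< exists x, rho x = p >]].

Lemma Im_group : group_set Im.
Proof.
apply/group_setP; split.
  rewrite inE; apply/asboolP; exists one; apply/permP => c.
  by rewrite rhoE perm1; apply: val_inj; rewrite act_val gV1 lcos1.
move=> p q; rewrite !inE => /asboolP[x <-] /asboolP[y <-].
by apply/asboolP; exists (mul x y); exact: rhoM.
Qed.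

Definition Gq := Group Im_group.
Definition hq := subg_of Gq.
Definition psi x : hq := subg Gq (rho x).

Lemma rho_in x : rho x \in Gq.
Proof. by rewrite inE; apply/asboolP; exists x. Qed.

Lemma psiM x y : psi (mul x y) = (psi x * psi y)%g.
Proof. by rewrite /psi rhoM subgM // rho_in. Qed.

Lemma psi_surj h : exists x, psi x = h.
Proof.
have := subgP h; rewrite inE => /asboolP [x e].
by exists x; rewrite /psi e sgvalK.
Qed.

Lemma psi_ker x : psi x = 1%g -> forall c, act x c = c.
Proof.
move=> h c; have e : rho x = rho one.
  have := congr1 sgval h; rewrite -(hom1 psiM).
  by rewrite /psi !subgK // rho_in.
have := congr1 (fun p : {perm Cos} => p c) e; rewrite !rhoE => ->.
by apply: val_inj; rewrite act_val gV1 lcos1.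
Qed.

Lemma ker_psi x : (forall c, act x c = c) -> psi x = 1%g.
Proof.
move=> h; rewrite -(hom1 psiM) /psi; congr (subg _ _); apply/permP => c.
by rewrite !rhoE h; apply: val_inj; rewrite act_val gV1 lcos1.
Qed.

Definition Nq := [set x | psi x = 1%g].

Lemma Nq_sgrp : sgrp Nq.
Proof.
split; first exact: (hom1 psiM).
  by move=> x y; rewrite /Nq /= psiM => -> ->; rewrite mulg1.
by move=> x; rewrite /Nq /= (homV psiM) => ->; rewrite invg1.
Qed.

Lemma W_Cos : W \in Cos.
Proof. by apply/CosP; exists one => //; rewrite lcos1. Qed.

Lemma Nq_W : Nq `<=` W.
Proof.
move=> x /psi_ker /(_ [` W_Cos]%fset) /(congr1 val); rewrite act_val /= => e.
have := lcos_self (inv x) sW; rewrite e => /(sgrpV sW); by rewrite gVK.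
Qed.

Lemma act_fixE (c : Cos) : exists z, [set x | act x c = c] =
  inv @^-1` ((mul^~ z) @^-1` ((mul (inv z)) @^-1` W)).
Proof.
have /CosP [z _ ez] := valP c; exists z.
apply/seteqP; split => x /=.
  move=> /(congr1 val); rewrite act_val -ez lcos_lcos => e.
  have := lcos_self (mul (inv x) z) sW; rewrite e => /lcosetE //.
move=> h; apply: val_inj; rewrite act_val -ez lcos_lcos; exact: lcos_eq.
Qed.

Lemma Nq_open : open Nq.
Proof.
have -> : Nq = \bigcap_(U in (fun c : Cos => [set x | act x c = c]) @` setT) U.
  apply/seteqP; split => x.
    by move=> /psi_ker h _ [c _ <-]; exact: h.
  by move=> h; apply: ker_psi => c; apply: (h _ (ex_intro2 _ _ c Logic.I erefl)).
apply: finite_bigcap_open; first exact: finite_image finite_finset.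
move=> _ [c _ <-]; have [z ->] := act_fixE c.
by apply: open_inv; apply: open_rmul; apply: open_lmul.
Qed.

Lemma psi_cont : continuous_to_discrete psi.
Proof.
move=> h; have [x0 <-] := psi_surj h.
have -> : psi @^-1` [set psi x0] = lcos x0 Nq.
  apply/seteqP; split => x /=.
    by move/(hom_eq psiM) => e; apply/lcosetE.
  by move/lcosetE => e; apply/(hom_eq psiM).
exact/open_lcoset/Nq_open.
Qed.

End Quot.

End P11.

Section P12.
Variables (gT : finGroupType) (G1 G2 : {group gT}).
Variables (T : topologicalType) (mul : T -> T -> T) (one : T) (inv : T -> T) (phi : T -> gT).
Hypothesis HG : is_topological_group mul one inv.
Hypothesis cT : compact [set: T].
Hypothesis hT : hausdorff_space T.
Hypothesis tdT : totally_disconnected [set: T].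
Hypothesis Hfin : forall n, (0 < n)%N -> finite_set (open_subgroups_of_index mul one inv n).
Local Notation gA := (gA HG).
Local Notation g1m := (g1m HG).
Local Notation gm1 := (gm1 HG).
Local Notation gVm := (gVm HG).
Local Notation gmV := (gmV HG).
Local Notation gKV := (gKV HG).
Local Notation gK := (gK HG).
Local Notation gKr := (gKr HG).
Local Notation gKVr := (gKVr HG).
Local Notation gVK := (gVK HG).
Local Notation gVM := (gVM HG).
Local Notation gV1 := (gV1 HG).
Local Notation lcosetE := (lcosetE HG).
Local Notation open_lcoset := (open_lcoset HG).
Local Notation open_inv := (open_inv HG).
Local Notation open_lmul := (open_lmul HG).
Local Notation open_rmul := (open_rmul HG).
Local Notation sgrp := (sgrp mul one inv).
Local Notation lcos := (Defs.lcoset mul).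
Local Notation fin_cosets := (fin_cosets HG cT).
Local Notation Fam := (Fam mul one inv).
Local Notation Ch := (Ch mul one inv).
Local Notation Ch_sgrp := (@Ch_sgrp _ mul one inv).
Local Notation Ch_subS := (Ch_subS HG).
Local Notation Ch_open := (Ch_open HG cT Hfin).
Local Notation Ch_closed := (Ch_closed HG cT Hfin).
Local Notation Ch_trivial := (Ch_trivial HG cT hT tdT).
Local Notation good := (good mul inv).
Local Notation g_uniq := (g_uniq HG).
Hypothesis Hhom : forall x y, phi (mul x y) = (phi x * phi y)%g.
Hypothesis Hcont : continuous_to_discrete phi.
Hypothesis Hng : ~ exists (hT : finGroupType) (psi : T -> hT) (theta : {morphism [set: hT] >-> gT}),
    [/\ (forall x y, psi (mul x y) = (psi x * psi y)%g),
        continuous_to_discrete psi,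
        (forall h : hT, exists x : T, psi x = h),
        (forall x : T, phi x = theta (psi x)) &
        ~~ ((theta @*^-1 G1)%g \isog (theta @*^-1 G2)%g)].

Local Notation hom1 := (hom1 HG).
Local Notation homV := (homV HG).

Definition Ap := phi @^-1` [set g | g \in G1].
Definition Bp := phi @^-1` [set g | g \in G2].
Definition Kp := phi @^-1` [set 1%g].

Lemma pre_open (X : set gT) : open (phi @^-1` X).
Proof.
have -> : phi @^-1` X = \bigcup_(g in X) phi @^-1` [set g].
  apply/seteqP; split => x; first by move=> Xx; exists (phi x).
  by case=> g Xg /= ->.
by apply: bigcup_open => g _; exact: Hcont.
Qed.

Lemma pre_sgrp (H : {group gT}) : sgrp (phi @^-1` [set g | g \in H]).
Proof.
split => /=.
- by rewrite (hom1 Hhom) group1.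
- by move=> x y Hx Hy; rewrite Hhom groupM.
- by move=> x Hx; rewrite (homV Hhom) groupV.
Qed.

Lemma Kp_sgrp : sgrp Kp.
Proof.
split => /=.
- exact: (hom1 Hhom).
- by move=> x y; rewrite /Kp /preimage /= Hhom => -> ->; rewrite mulg1.
- by move=> x; rewrite /Kp /preimage /= (homV Hhom) => ->; rewrite invg1.
Qed.

Lemma quot_rel W : sgrp W -> open W -> W `<=` Kp ->
  exists N R0, [/\ sgrp N, open N, N `<=` W & good Ap Bp N N R0].
Proof.
move=> sW oW WK.
pose ps := psi HG cT sW oW.
have psM : forall x y, ps (mul x y) = (ps x * ps y)%g := psiM HG cT sW oW.
have psS : forall h, exists x, ps x = h := @psi_surj _ _ _ _ HG cT W sW oW.
pose pre h := projT1 (cid (psS h)).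
have preP : forall h, ps (pre h) = h by move=> h; rewrite /pre; case: (cid (psS h)).
pose theta h := phi (pre h).
have theta_psi : forall x, theta (ps x) = phi x.
  move=> x; rewrite /theta; have := preP (ps x).
  move/(hom_eq HG psM) => /(@Nq_W _ _ _ _ HG cT W sW oW) /WK /=.
  by move=> h; apply/(hom_eq HG Hhom); exact: h.
have thM : {in [set: hq HG cT sW oW]%SET &, {morph theta : a b / (a * b)%g >-> (a * b)%g}}.
  move=> a b _ _; rewrite -(preP a) -(preP b) -psM !theta_psi Hhom //.
pose thm := Morphism thM.
have iso : ((thm @*^-1 G1)%g \isog (thm @*^-1 G2)%g).
  apply: contrapT => ni; apply: Hng.
  exists (hq HG cT sW oW), ps, thm; split => //.
  - exact: psi_cont.
  - by apply/negP.
case/isogP: iso => f injf imf.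
have memD : forall (H : {group gT}) x, (ps x \in (thm @*^-1 H)%g) = (phi x \in H).
  by move=> H x; rewrite !inE /= theta_psi.
pose R0 x y := [/\ Ap x, Bp y & f (ps x) = ps y].
have D1 : forall x, Ap x -> ps x \in (thm @*^-1 G1)%g by move=> x Ax; rewrite memD.
exists (Nq HG cT sW oW), R0; split.
- exact: Nq_sgrp.
- exact: Nq_open.
- by move=> x /(@Nq_W _ _ _ _ HG cT W sW oW).
split.
- by move=> x y [].
- move=> x Ax; have := mem_morphim f (D1 x Ax) (D1 x Ax); rewrite imf.
  have [y ey] := psS (f (ps x)); rewrite -ey memD => By.
  by exists y; split.
- move=> y By; have : ps y \in (f @* (thm @*^-1 G1))%g by rewrite imf memD.
  case/morphimP => h _ Dh ey.
  have [x ex] := psS h; exists x; split => //.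
    by move: Dh; rewrite -ex memD.
  by rewrite ex.
- move=> x y x' y' [Ax By e] [Ax' By' e']; split.
  + by rewrite /Ap /= Hhom groupM.
  + by rewrite /Bp /= Hhom groupM.
  + by rewrite !psM morphM ?D1 // e e'.
- move=> x y [Ax By e]; split.
  + by rewrite /Ap /= (homV Hhom) groupV.
  + by rewrite /Bp /= (homV Hhom) groupV.
  + by rewrite !(homV psM) morphV ?D1 // e.
- move=> x y [Ax By e]; rewrite /Nq /= -/ps; split => h.
    by rewrite -e; apply/eqP; rewrite (morph_injm_eq1 injf (D1 x Ax)) h.
  by apply/eqP; rewrite -(morph_injm_eq1 injf (D1 x Ax)) e h.
- move=> x y a b [Ax By e] Na Nb.
  have pa : phi a = 1%g by apply: WK; exact: (@Nq_W _ _ _ _ HG cT W sW oW _ Na).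
  have pb : phi b = 1%g by apply: WK; exact: (@Nq_W _ _ _ _ HG cT W sW oW _ Nb).
  split.
  + by rewrite /Ap /= Hhom pa mulg1.
  + by rewrite /Bp /= Hhom pb mulg1.
  + by rewrite !psM; rewrite /Nq /= -/ps in Na Nb; rewrite Na Nb !mulg1.
Qed.


Lemma level_good m : exists R, good Ap Bp (Ch Ap m.+1) (Ch Bp m.+1) R.
Proof.
have sA := pre_sgrp G1; have sB := pre_sgrp G2.
have oA : open Ap := pre_open _; have oB : open Bp := pre_open _.
pose W := Ch Ap m.+1 `&` Ch Bp m.+1 `&` Kp.
have sW : sgrp W by apply: sgrpI; [apply: sgrpI; exact: Ch_sgrp | exact: Kp_sgrp].
have oW : open W.
  apply: openI; last exact: pre_open.
  by apply: openI; apply: Ch_open.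
have [N [R0 [sN oN NW gR]]] := quot_rel sW oW (fun x h => h.2).
exists (res mul one inv Ap Bp m.+1 R0).
apply: (res_good HG gR sA sB sN sN oN oN _ _ oA oB (ltn0Sn m)).
  by move=> x /NW [[]].
by move=> x /NW [[]].
Qed.

Lemma main_iso : top_group_isomorphic mul Ap Bp.
Proof.
have sA := pre_sgrp G1; have sB := pre_sgrp G2.
have oA : open Ap := pre_open _; have oB : open Bp := pre_open _.
pose S m := [set R | good Ap Bp (Ch Ap m.+1) (Ch Bp m.+1) R].
pose r m R := res mul one inv Ap Bp m.+1 R.
have Sfin : forall m, finite_set (S m).
  move=> m; apply: (good_fin HG cT Ap Bp (Ch_sgrp _ _) (Ch_sgrp _ _)); exact: Ch_open.
have Sne : forall m, S m !=set0 by move=> m; exact: level_good.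
have Sr : forall m R, S m.+1 R -> S m (r m R).
  move=> m R gR; apply: (res_good HG gR sA sB (Ch_sgrp _ _) (Ch_sgrp _ _) _ _ _ _ oA oB (ltn0Sn m)).
  - exact: Ch_open.
  - exact: Ch_open.
  - exact: (Ch_mono (leqnSn _)).
  - exact: (Ch_mono (leqnSn _)).
have [u hu] := konig Sfin Sne Sr.
have HR : forall m, good Ap Bp (Ch Ap m.+1) (Ch Bp m.+1) (u m) by move=> m; case: (hu m).
have Hdec : forall m x y, u m.+1 x y -> u m x y.
  move=> m x y h; case: (hu m) => _ <-; exists x, y; split => //; rewrite gVm; exact: sgrp1 (Ch_sgrp _ _).
exact: (iso_from_family HG cT hT tdT Hfin sA oA sB oB HR Hdec).
Qed.

End P12.

Unset Implicit Arguments.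

Theorem proposition3p1
  (gT : finGroupType) (G1 G2 : {group gT})
  (T : topologicalType) (mul : T -> T -> T) (one : T) (inv : T -> T)
  (phi : T -> gT) :
  is_profinite_group mul one inv ->
  (forall x y, phi (mul x y) = (phi x * phi y)%g) ->
  continuous_to_discrete phi ->
  (forall g : gT, exists x : T, phi x = g) ->
  ~ top_group_isomorphic mul (phi @^-1` [set g | g \in G1])
                             (phi @^-1` [set g | g \in G2]) ->
  (forall n : nat, (0 < n)%N -> finite_set (open_subgroups_of_index mul one inv n)) ->
  exists (hT : finGroupType) (psi : T -> hT) (theta : {morphism [set: hT] >-> gT}),
    [/\ (forall x y, psi (mul x y) = (psi x * psi y)%g),
        continuous_to_discrete psi,
        (forall h : hT, exists x : T, psi x = h),
        (forall x : T, phi x = theta (psi x)) &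
        ~~ ((theta @*^-1 G1)%g \isog (theta @*^-1 G2)%g)].
Proof.
move=> [HG cT hT tdT] Hhom Hcont _ Hnot Hfin.
apply: contrapT => Hng; apply: Hnot.
exact: (main_iso HG cT hT tdT Hfin Hhom Hcont Hng).
Qed.
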